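(* Let $N,M_d\ge 1$, $\varepsilon\ge0$, and $\tilde{\mathbf H}_{rd}=[\tilde{\mathbf h}_1,\dots,\tilde{\mathbf h}_N]\in\mathbb C^{M_d\times N}$. Fix any $\mathbf r\in\mathbb C^{M_d}$ with $\|\mathbf r\|_2=1$, set $\alpha_i=|\tilde{\mathbf h}_i^H\mathbf r|$ and $\chi(N)=\sum_{i=1}^N\alpha_i^2$, and let $\Omega(k^\circ)$ denote the optimal value of $$\max_{\mathbf w\in\mathbb C^N}\ |\mathbf r^H\tilde{\mathbf H}_{rd}\mathbf w|-\varepsilon\|\mathbf w\|_2\quad\text{s.t. } |w_i|\le1,\ i=1,\dots,N$$ (equivalently of $\max\ \sum_{i=1}^N|w_i|\alpha_i-\varepsilon\sqrt{\sum_{i=1}^N|w_i|^2}$ over $|w_i|\le 1$). Then $\Omega(k^\circ)>0$ if and only if $\varepsilon<\sqrt{\chi(N)}$; moreover $\sqrt{\chi(N)}\leq \sqrt{\lambda_{\max}(\tilde {\mathbf H}_{rd}\tilde {\mathbf H}_{rd}^H)}$.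
   Context: $\lambda_{\max}(\cdot)$ denotes the largest eigenvalue of a Hermitian matrix; $\tilde{\mathbf h}_i$ is the $i$-th column of $\tilde{\mathbf H}_{rd}$; $w_i$ the $i$-th entry of $\mathbf w$; $(\cdot)^H$ conjugate transpose; $\|\cdot\|_2$ Euclidean norm. *)

(* Defs.v *)
From HB Require Import structures.
From mathcomp Require Import all_boot all_order all_algebra.
From mathcomp Require Import complex.
From mathcomp Require Import classical_sets reals.
Set Implicit Arguments. Unset Strict Implicit. Unset Printing Implicit Defensive.
Import Order.TTheory GRing.Theory Num.Theory.
Local Open Scope ring_scope.
Local Open Scope classical_set_scope.

Notation normc := ComplexField.Normc.normc.

Definition mxH (R : rcfType) m n (A : 'M[R[i]]_(m, n)) : 'M[R[i]]_(n, m) :=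
  \matrix_(i < n, j < m) conjc (A j i).

Definition vnorm2 (R : rcfType) n (v : 'cV[R[i]]_n) : R :=
  Num.sqrt (\sum_(i < n) (normc (v i 0)) ^+ 2).

Definition alpha (R : rcfType) Md N (H : 'M[R[i]]_(Md, N)) (r : 'cV[R[i]]_Md)
  (i : 'I_N) : R := normc ((mxH (col i H) *m r) 0 0).

Definition chi (R : rcfType) Md N (H : 'M[R[i]]_(Md, N)) (r : 'cV[R[i]]_Md) : R :=
  \sum_(i < N) (alpha H r i) ^+ 2.

Definition objective (R : rcfType) Md N (H : 'M[R[i]]_(Md, N)) (r : 'cV[R[i]]_Md)
  (eps : R) (w : 'cV[R[i]]_N) : R :=
  normc ((mxH r *m H *m w) 0 0) - eps * vnorm2 w.

Definition feasible (R : rcfType) N (w : 'cV[R[i]]_N) : Prop :=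
  forall i : 'I_N, normc (w i 0) <= 1.

(* optimal value Omega(k°) = sup of the objective over the feasible set
   (the maximum is attained since the feasible set is compact) *)
Definition Omega (R : realType) Md N (H : 'M[R[i]]_(Md, N)) (r : 'cV[R[i]]_Md)
  (eps : R) : R :=
  sup [set objective H r eps w | w in [set w | feasible w]].

(* largest eigenvalue of a Hermitian matrix (its eigenvalues are real) *)
Definition lambda_max (R : realType) n (A : 'M[R[i]]_n) : R :=
  sup [set x : R | eigenvalue A (x%:C)%C].

(* Main.v *)
Require Import Defs.
From HB Require Import structures.
From mathcomp Require Import all_boot all_order all_algebra.
From mathcomp Require Import complex.
From mathcomp Require Import classical_sets reals.
From mathcomp Require Import ring lra.
Import Order.TTheory GRing.Theory Num.Theory.
Local Open Scope ring_scope.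

Section Aux.
Context {R : rcfType}.
Implicit Types z : R[i].

Lemma normcC z : ((normc z)%:C)%C = `|z|.
Proof. by case: z => a b; rewrite normc_def. Qed.

Lemma normc_ge0 z : 0 <= normc z.
Proof. by case: z => a b; rewrite /= sqrtr_ge0. Qed.

Lemma normc_conj z : normc (conjc z) = normc z.
Proof. by case: z => a b; rewrite /= sqrrN. Qed.

Lemma mul_conj z : z * conjc z = (((normc z) ^+ 2)%:C)%C.
Proof. by rewrite -sqr_normc -normcC rmorphXn. Qed.

Lemma normc_real (x : R) : normc ((x%:C)%C) = `|x|.
Proof. by rewrite /= expr0n addr0 sqrtr_sqr. Qed.

Lemma normc_sum {n} (f : 'I_n -> R[i]) : normc (\sum_i f i) <= \sum_i normc (f i).
Proof.
apply: (big_ind2 (fun (x : R[i]) (y : R) => normc x <= y)).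
- by rewrite ComplexField.Normc.normc0.
- move=> x1 x2 y1 y2 h1 h2; apply: le_trans (le_normcD _ _) _; exact: lerD.
- by [].
Qed.

Lemma real_sum n (f : 'I_n -> R) : (((\sum_i f i)%:C)%C : R[i]) = \sum_i ((f i)%:C)%C.
Proof. by rewrite rmorph_sum. Qed.

Lemma conj_sum n (f : 'I_n -> R[i]) : conjc (\sum_i f i) = \sum_i conjc (f i).
Proof. exact: (rmorph_sum (@Num.conj_op R[i])). Qed.

Lemma cs_sq n (a b : 'I_n -> R) :
  (\sum_i a i * b i) ^+ 2 <= (\sum_i a i ^+ 2) * (\sum_i b i ^+ 2).
Proof.
have E : \sum_i \sum_j (a i * b j - a j * b i) ^+ 2 =
  2 * ((\sum_i a i ^+ 2) * (\sum_i b i ^+ 2) - (\sum_i a i * b i) ^+ 2).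
  have e1 : \sum_i \sum_j (a i * b j - a j * b i) ^+ 2 =
     \sum_i \sum_j (a i ^+ 2 * b j ^+ 2) + \sum_i \sum_j (a j ^+ 2 * b i ^+ 2)
     - 2 * \sum_i \sum_j ((a i * b i) * (a j * b j)).
    rewrite mulr_sumr -big_split -sumrB /=; apply: eq_bigr => i _.
    rewrite mulr_sumr -big_split -sumrB /=; apply: eq_bigr => j _; ring.
  rewrite e1 [X in _ + X - _]exchange_big /= expr2 !big_distrlr /=; ring.
have : 0 <= \sum_i \sum_j (a i * b j - a j * b i) ^+ 2.
  by apply: sumr_ge0 => i _; apply: sumr_ge0 => j _; exact: sqr_ge0.
by rewrite E pmulr_rge0 // subr_ge0.
Qed.
Lemma cs_sqrt n (a b : 'I_n -> R) :
  \sum_i a i * b i <= Num.sqrt (\sum_i a i ^+ 2) * Num.sqrt (\sum_i b i ^+ 2).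
Proof.
rewrite -sqrtrM ?sumr_ge0 // => [|i _]; last exact: sqr_ge0.
apply: le_trans (ler_norm _) _; rewrite -sqrtr_sqr ler_sqrt ?cs_sq //.
by apply: mulr_ge0; apply: sumr_ge0 => i _; exact: sqr_ge0.
Qed.

Lemma g_norm {Md N} (H : 'M[R[i]]_(Md, N)) (r : 'cV[R[i]]_Md) i :
  normc ((mxH r *m H) 0 i) = alpha H r i.
Proof.
rewrite /alpha !mxE -normc_conj conj_sum; congr normc; apply: eq_bigr => k _.
rewrite !mxE rmorphM mulrC; congr (_ * _); exact: conjcK.
Qed.

Lemma obj_bound {Md N} (H : 'M[R[i]]_(Md, N)) (r : 'cV[R[i]]_Md) w :
  normc ((mxH r *m H *m w) 0 0) <= Num.sqrt (chi H r) * vnorm2 w.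
Proof.
rewrite mxE; apply: le_trans (normc_sum _) _.
under eq_bigr => i _ do rewrite ComplexField.Normc.normcM g_norm.
exact: cs_sqrt.
Qed.

Lemma obj_bound2 {Md N} (H : 'M[R[i]]_(Md, N)) (r : 'cV[R[i]]_Md) w :
  feasible w -> normc ((mxH r *m H *m w) 0 0) <= \sum_i alpha H r i.
Proof.
move=> fw; rewrite mxE; apply: le_trans (normc_sum _) _.
apply: ler_sum => i _; rewrite ComplexField.Normc.normcM g_norm.
apply: ler_piMr; [exact: normc_ge0 | exact: fw].
Qed.
End Aux.

Lemma alpha_ge0 {R : rcfType} {Md N} (H : 'M[R[i]]_(Md, N)) r i : 0 <= alpha H r i.
Proof. exact: normc_ge0. Qed.

Lemma chi_ge0 {R : rcfType} {Md N} (H : 'M[R[i]]_(Md, N)) r : 0 <= chi H r.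
Proof. by apply: sumr_ge0 => i _; exact: sqr_ge0. Qed.

Lemma part1 (R : realType) N Md (eps : R) (heps : 0 <= eps)
  (H : 'M[R[i]]_(Md, N)) (r : 'cV[R[i]]_Md) :
  (0 < Omega H r eps <-> eps < Num.sqrt (chi H r)).
Proof.
rewrite /Omega; set S := (X in sup X).
have vn0 : forall n (w : 'cV[R[i]]_n), 0 <= vnorm2 w by move=> n w; exact: sqrtr_ge0.
have S0 : S (objective H r eps 0).
  exists 0 => //= i; rewrite mxE ComplexField.Normc.normc0; exact: ler01.
have Sne : (S !=set0)%classic by exists (objective H r eps 0).
have Sub : ubound S (\sum_i alpha H r i).
  move=> _ [w fw <-]; rewrite /objective.
  have := obj_bound2 H r w fw; have := mulr_ge0 heps (vn0 _ w); lra.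
have hs : has_sup S by split => //; exists (\sum_i alpha H r i).
split.
- move=> Opos; rewrite ltNge; apply/negP => hle.
  have : Omega H r eps <= 0.
    apply: ge_sup Sne _ => _ [w fw <-]; rewrite /objective subr_le0.
    apply: le_trans (obj_bound H r w) _; exact: ler_wpM2r.
  by rewrite leNgt Opos.
- move=> hlt.
  have c0 : 0 < Num.sqrt (chi H r) by apply: le_lt_trans hlt.
  set A := \sum_i alpha H r i.
  have A0 : 0 <= A by apply: sumr_ge0 => i _; exact: alpha_ge0.
  set s := (1 + A)^-1.
  have s0 : 0 < s by rewrite invr_gt0; lra.
  pose w : 'cV[R[i]]_N := \col_i ((s%:C)%C * conjc ((mxH r *m H) 0 i)).
  have nw : forall i, normc (w i 0) = s * alpha H r i.
    move=> i; rewrite mxE ComplexField.Normc.normcM normc_real normc_conj g_norm.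
    by rewrite ger0_norm // ltW.
  have fw : feasible w.
    move=> i; rewrite nw mulrC ler_pdivrMr ?mul1r; last lra.
    rewrite /A (bigD1 i) //=; have := alpha_ge0 H r i.
    have : 0 <= \sum_(j < N | j != i) alpha H r j.
      by apply: sumr_ge0 => j _; exact: alpha_ge0.
    lra.
  have val : (mxH r *m H *m w) 0 0 = ((s * chi H r)%:C)%C.
    rewrite mxE rmorphM /= /chi real_sum mulr_sumr; apply: eq_bigr => i _.
    by rewrite [w i 0]mxE mulrCA mul_conj g_norm.
  have vw : vnorm2 w = s * Num.sqrt (chi H r).
    rewrite /vnorm2; under eq_bigr => i _ do rewrite nw exprMn.
    rewrite -mulr_sumr sqrtrM ?sqr_ge0 // sqrtr_sqr ger0_norm //; exact: ltW.
  have Sw : S (objective H r eps w) by exists w.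
  apply: lt_le_trans (sup_upper_bound hs Sw).
  rewrite /objective val normc_real vw ger0_norm; last first.
    by apply: mulr_ge0; [exact: ltW | exact: chi_ge0].
  set q := Num.sqrt (chi H r).
  have -> : chi H r = q ^+ 2 by rewrite sqr_sqrtr // chi_ge0.
  rewrite (_ : s * q ^+ 2 - eps * (s * q) = s * q * (q - eps)); last by ring.
  by apply: mulr_gt0; [exact: mulr_gt0 | rewrite subr_gt0].
Qed.

Section Part2.
Local Open Scope sesquilinear_scope.

Lemma mxHE {R : rcfType} m n (M : 'M[R[i]]_(m, n)) : mxH M = M ^t*.
Proof. by apply/matrixP => i j; rewrite !mxE. Qed.

Lemma dotself {R : rcfType} n (v : 'cV[R[i]]_n) :
  (v ^t* *m v) 0 0 = ((\sum_j normc (v j 0) ^+ 2)%:C)%C.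
Proof.
rewrite mxE real_sum; apply: eq_bigr => j _.
by rewrite !mxE mulrC mul_conj.
Qed.

Lemma dotdiag {R : rcfType} n (v : 'cV[R[i]]_n) (D : 'rV[R[i]]_n) :
  (v ^t* *m diag_mx D *m v) 0 0 = \sum_j D 0 j * ((normc (v j 0) ^+ 2)%:C)%C.
Proof.
rewrite mxE; apply: eq_bigr => j _.
rewrite mul_mx_diag !mxE -mul_conj; change (conjc (v j 0)) with (Num.conj (v j 0)); ring.
Qed.

Lemma part2 (R : realType) Md N (H : 'M[R[i]]_(Md, N)) (r : 'cV[R[i]]_Md)
  (hr : vnorm2 r = 1) :
  Num.sqrt (chi H r) <= Num.sqrt (lambda_max (H *m mxH H)).
Proof.
apply: ler_wsqrtr.
rewrite mxHE; set A := H *m H ^t*.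
have AtA : A ^t* = A by rewrite /A trmx_mul map_mxM trmxCK.
have An : A \is normalmx by apply/normalmxP; rewrite AtA.
have /orthomx_spectralP hA := An.
set P := spectralmx A in hA; set D := spectral_diag A in hA.
have Pu : P \is unitarymx := spectral_unitarymx A.
have Pi : P \in unitmx := spectral_unit A.
have iP : invmx P = P ^t* := invmx_unitary Pu.
have dD : diag_mx D = P *m A *m invmx P.
  by rewrite hA !mulmxA mulmxV // mul1mx mulmxK.
pose x j := \sum_k normc ((P *m H) j k) ^+ 2.
have hD : forall j, D 0 j = ((x j)%:C)%C.
  move=> j; have := congr1 (fun M : 'M[R[i]]_Md => M j j) dD; rewrite mxE eqxx mulr1n => ->.
  have -> : P *m A *m invmx P = (P *m H) *m (P *m H) ^t*.
    by rewrite /A iP trmx_mul map_mxM !mulmxA.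
  rewrite mxE real_sum; apply: eq_bigr => k _; by rewrite !mxE mul_conj.
have x0 : forall j, 0 <= x j by move=> j; apply: sumr_ge0 => k _; exact: sqr_ge0.
have eigD : forall j, eigenvalue A (D 0 j).
  move=> j; apply/eigenvalueP; exists ('e_j *m P).
    by rewrite hA !mulmxA mulmxK // -(rowE j (diag_mx D)) row_diag_mx -scalemxAl.
  apply/eqP => h; have := congr1 (mulmx^~ (invmx P)) h.
  rewrite mulmxK // mul0mx => /matrixP /(_ 0 j); rewrite !mxE !eqxx /=.
  by move/eqP; rewrite oner_eq0.
have eigInv : forall a, eigenvalue A a -> exists j, a = D 0 j.
  move=> a /eigenvalueP [v hv vn0].
  set w := v *m invmx P.
  have hw : w *m diag_mx D = a *: w.
    by rewrite /w dD !mulmxA mulmxKV // -[v *m H *m H ^t*]mulmxA -/A hv -scalemxAl.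
  have wn0 : w != 0.
    apply: contraNneq vn0 => h.
    by rewrite -(mulmxKV Pi v) -/w h mul0mx.
  have [j hj] : exists j, w 0 j != 0.
    case: (pickP (fun j => w 0 j != 0)) => [j hj|h]; first by exists j.
    exfalso; move/eqP: wn0; apply; apply/matrixP => i k.
    by rewrite ord1 [RHS]mxE; move: (h k) => /= /negbFE /eqP.
  exists j; have := congr1 (fun M : 'rV[R[i]]_Md => M 0 j) hw.
  move=> /= e; rewrite mul_mx_diag [LHS]mxE [RHS]mxE in e.
  by apply: (mulfI hj); rewrite e mulrC.
rewrite /lambda_max; set S := (X in sup X).
have Sx : forall j, S (x j) by move=> j; rewrite /S /= -hD.
have Sub : ubound S (\sum_j x j).
  move=> y /eigInv [k]; rewrite hD => /complexI ->.
  rewrite (bigD1 k) //=; have : 0 <= \sum_(j < Md | j != k) x j.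
    by apply: sumr_ge0 => j _; exact: x0.
  lra.
have xle : forall j, x j <= sup S.
  move=> j; apply: sup_upper_bound (Sx j); split; first by exists (x j).
  by exists (\sum_j x j).
pose nn j := normc ((P *m r) j 0) ^+ 2.
have hn : \sum_j nn j = 1.
  have h1 : \sum_k normc (r k 0) ^+ 2 = 1.
    move: hr; rewrite /vnorm2 => e.
    by rewrite -(sqr_sqrtr (a := \sum_k normc (r k 0) ^+ 2)) ?e ?expr1n //;
      apply: sumr_ge0 => k _; exact: sqr_ge0.
  apply: complexI; rewrite -dotself.
  rewrite trmx_mul map_mxM -iP mulmxA -[_ *m invmx P *m P]mulmxA mulVmx //.
  by rewrite mulmx1 dotself h1.
have key : chi H r = \sum_j x j * nn j.
  apply: complexI.
  have -> : ((chi H r)%:C)%C = ((H ^t* *m r) ^t* *m (H ^t* *m r)) 0 0.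
    rewrite dotself; congr ((_)%:C)%C; apply: eq_bigr => i _.
    congr (_ ^+ 2); rewrite /alpha; congr normc.
    by rewrite !mxE; apply: eq_bigr => k _; rewrite !mxE.
  rewrite trmx_mul map_mxM trmxCK mulmxA -[_ *m H *m H ^t*]mulmxA -/A hA.
  rewrite iP !mulmxA -map_mxM -trmx_mul -[_ *m diag_mx D *m P *m r]mulmxA.
  rewrite dotdiag real_sum; apply: eq_bigr => j _.
  by rewrite hD -rmorphM.
rewrite key; apply: le_trans (_ : \sum_j sup S * nn j <= _).
  apply: ler_sum => j _; apply: ler_wpM2r; [exact: sqr_ge0 | exact: xle].
by rewrite -mulr_sumr hn mulr1.
Qed.
End Part2.

Theorem proposition1 (R : realType) (N Md : nat) (hN : (0 < N)%N) (hMd : (0 < Md)%N)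
  (eps : R) (heps : 0 <= eps) (H : 'M[R[i]]_(Md, N)) (r : 'cV[R[i]]_Md)
  (hr : vnorm2 r = 1) :
  (0 < Omega H r eps <-> eps < Num.sqrt (chi H r)) /\
  Num.sqrt (chi H r) <= Num.sqrt (lambda_max (H *m mxH H)).
Proof. split; [exact: part1 | exact: part2]. Qed.
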